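(* Consider the Ising model $H(\sigma)=-J\sum_{\langle x,y\rangle}\sigma(x)\sigma(y)$ on the Cayley tree $\tau^k$ with $\theta=\tanh(J\beta)$ and $\alpha=\frac{1-\theta}{1+\theta}$, and let $A\subset N_k=\{1,\dots,k+1\}$ with $|A|=k$. Suppose $\alpha>1$. Then: 1) If $k\le 3$, every $H_A$-weakly periodic Gibbs measure on the invariant set $I_3$ is translation-invariant. 2) If $k=4$, there exists a critical value $\alpha_{cr}$ ($\approx 6.3716$) such that: for $\alpha<\alpha_{cr}$ there is exactly one $H_A$-weakly periodic Gibbs measure on $I_3$; for $\alpha=\alpha_{cr}$ there are exactly three $H_A$-weakly periodic Gibbs measures on $I_3$; for $\alpha>\alpha_{cr}$ there are exactly five $H_A$-weakly periodic Gibbs measures on $I_3$.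
   Context: $\tau^k=(V,L)$ is the Cayley tree of order $k\ge1$ (every vertex has $k+1$ neighbours). Its vertices are identified with the group $G_k$, the free product of $k+1$ cyclic groups of order two with generators $a_1,\dots,a_{k+1}$ ($a_i^2=e$), so that $x,y$ are neighbours iff $x=ya_i$ for some $i$; the root is $e$. For $x\in G_k$, $S(x)$ denotes the set of direct successors of $x$ (neighbours farther from $e$), and $x_\downarrow$ denotes the unique neighbour of $x$ not in $S(x)$. Spins take values $\sigma(x)\in\{-1,1\}$, $J\in\mathbb R$, $\beta=1/T>0$. Gibbs measures are constructed from boundary fields $h=\{h_x\in\mathbb R: x\in G_k\}$ via $\mu_n(\sigma_n)=Z_n^{-1}\exp\{-\beta H(\sigma_n)+\sum_{x\in W_n}h_x\sigma(x)\}$ on balls $V_n$ (with $W_n$ the sphere of radius $n$); these are consistent (and define a limiting Gibbs measure) iff $h_x=\sum_{y\in S(x)}f(h_y,\theta)$ for all $x$, where $f(h,\theta)=\operatorname{arcth}(\theta\tanh h)$. Distinct such $h$ give distinct measures. For $\emptyset\ne A\subseteq N_k$, $H_A=\{x\in G_k:\sum_{i\in A}w_x(a_i)\text{ is even}\}$, where $w_x(a_i)$ is the number of letters $a_i$ in the (reduced) word $x$; it is a normal subgroup of index 2. A collection $h$ is $H_A$-weakly periodic if $h_x$ depends only on whether $x\in H_A$ and whether $x_\downarrow\in H_A$: $h_x=h_1$ if $x\in H_A,x_\downarrow\in H_A$; $h_2$ if $x\in H_A,x_\downarrow\notin H_A$; $h_3$ if $x\notin H_A,x_\downarrow\in H_A$;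 $h_4$ if $x\notin H_A,x_\downarrow\notin H_A$. A Gibbs measure is $H_A$-weakly periodic if it corresponds to such an $h$. For $|A|=k$ the consistency condition becomes the system $h_1=kf(h_3,\theta)$, $h_2=(k-1)f(h_3,\theta)+f(h_1,\theta)$, $h_3=(k-1)f(h_2,\theta)+f(h_4,\theta)$, $h_4=kf(h_2,\theta)$, and $H_A$-weakly periodic Gibbs measures correspond bijectively to its solutions $(h_1,h_2,h_3,h_4)\in\mathbb R^4$. The invariant set is $I_3=\{h\in\mathbb R^4: h_1=-h_4,\ h_2=-h_3\}$; ''measures on $I_3$'' means those whose solution lies in $I_3$. A measure is translation-invariant if $h_x$ is constant in $x$ (i.e. $h_1=h_2=h_3=h_4$). *)

(* Defs.v *)
From Stdlib Require Import Reals List.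
Open Scope R_scope.

Definition arcth (x : R) : R := / 2 * ln ((1 + x) / (1 - x)).

Definition fI (h theta : R) : R := arcth (theta * tanh h).

Definition theta_of (J beta : R) : R := tanh (J * beta).
Definition alpha_of (J beta : R) : R :=
  (1 - theta_of J beta) / (1 + theta_of J beta).

Definition R4 : Type := (R * R * R * R)%type.

(* The consistency system for H_A-weakly periodic boundary laws, |A| = k.
   Its solutions are in bijection with H_A-weakly periodic Gibbs measures. *)
Definition wp_system (k : nat) (theta : R) (h : R4) : Prop :=
  match h with (h1, h2, h3, h4) =>
    h1 = INR k * fI h3 theta /\
    h2 = INR (k - 1) * fI h3 theta + fI h1 theta /\
    h3 = INR (k - 1) * fI h2 theta + fI h4 theta /\
    h4 = INR k * fI h2 theta
  end.

Definition in_I3 (h : R4) : Prop :=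
  match h with (h1, h2, h3, h4) => h1 = - h4 /\ h2 = - h3 end.

Definition transl_inv (h : R4) : Prop :=
  match h with (h1, h2, h3, h4) => h1 = h2 /\ h2 = h3 /\ h3 = h4 end.

Definition has_exactly {T : Type} (n : nat) (P : T -> Prop) : Prop :=
  exists l : list T, NoDup l /\ length l = n /\ (forall x, In x l <-> P x).

(* Main.v *)
Require Import Defs.
From Stdlib Require Import Reals List Lra Psatz.
Open Scope R_scope.

Definition Ex (x : R) : R := exp (2 * x).
Definition L (a : R) : R := / 2 * ln a.
Definition psi (al a : R) : R := (a + al) / (al * a + 1).

Lemma Ex_pos x : 0 < Ex x.
Proof. unfold Ex; apply exp_pos. Qed.

Lemma Ex_inj x y : Ex x = Ex y -> x = y.
Proof. unfold Ex; intro H; apply exp_inv in H; lra. Qed.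

Lemma Ex_L a : 0 < a -> Ex (L a) = a.
Proof. intro Ha; unfold Ex, L. replace (2 * (/2 * ln a)) with (ln a) by field. now apply exp_ln. Qed.

Lemma L_Ex x : L (Ex x) = x.
Proof. unfold Ex, L. rewrite ln_exp. field. Qed.

Lemma Ex_plus x y : Ex (x + y) = Ex x * Ex y.
Proof. unfold Ex. rewrite <- exp_plus. f_equal; ring. Qed.

Lemma Ex_opp x : Ex (- x) = / Ex x.
Proof. unfold Ex. rewrite <- exp_Ropp. f_equal; ring. Qed.

Lemma Ex_INR n x : Ex (INR n * x) = Ex x ^ n.
Proof.
  induction n as [|n IH].
  - simpl. unfold Ex. replace (2 * (0 * x)) with 0 by ring. apply exp_0.
  - rewrite S_INR. replace ((INR n + 1) * x) with (INR n * x + x) by ring.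
    rewrite Ex_plus, IH. simpl. ring.
Qed.

Lemma tanh_Ex h : tanh h = (Ex h - 1) / (Ex h + 1).
Proof.
  unfold tanh, sinh, cosh, Ex.
  replace (2 * h) with (h + h) by ring. rewrite exp_plus, exp_Ropp.
  pose proof (exp_pos h). field. split; nra.
Qed.

Lemma fI_Ex h th : -1 < th < 1 ->
  Ex (fI h th) = psi ((1 - th) / (1 + th)) (Ex h).
Proof.
  intros [H1 H2]. unfold fI, arcth. rewrite tanh_Ex.
  pose proof (Ex_pos h) as HE. set (E := Ex h) in *.
  assert (Hd1 : 0 < 1 - th * ((E - 1) / (E + 1))).
  { replace (1 - th * ((E - 1) / (E + 1))) with ((E + 1 - th * (E - 1)) / (E + 1)) by (field; lra).
    apply Rdiv_lt_0_compat; nra. }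
  assert (Hd2 : 0 < 1 + th * ((E - 1) / (E + 1))).
  { replace (1 + th * ((E - 1) / (E + 1))) with ((E + 1 + th * (E - 1)) / (E + 1)) by (field; lra).
    apply Rdiv_lt_0_compat; nra. }
  unfold Ex. replace (2 * (/ 2 * ln ((1 + th * ((E - 1) / (E + 1))) / (1 - th * ((E - 1) / (E + 1))))))
    with (ln ((1 + th * ((E - 1) / (E + 1))) / (1 - th * ((E - 1) / (E + 1))))) by field.
  rewrite exp_ln by (apply Rdiv_lt_0_compat; lra).
  unfold psi. field. repeat split; try lra.
  nra.
Qed.

Definition wpoly (k : nat) (al q : R) : Prop :=
  (al - q) * q ^ (k - 1) * (q ^ k + al) = (al * q - 1) * (al * q ^ k + 1).

Definition Hq (k : nat) (al q : R) : R4 :=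
  (- L (q ^ k), L ((al - q) / (al * q - 1)), - L ((al - q) / (al * q - 1)), L (q ^ k)).

Lemma psi_inv al a : 0 < a -> 0 < al -> psi al (/ a) = / psi al a.
Proof. intros Ha Hal. unfold psi. field. repeat split; nra. Qed.

Lemma psi_pos al a : 0 < a -> 0 < al -> 0 < psi al a.
Proof. intros. unfold psi. apply Rdiv_lt_0_compat; nra. Qed.

Lemma forward k th al h : (1 <= k)%nat -> -1 < th < 1 -> al = (1 - th) / (1 + th) -> 1 < al ->
  wp_system k th h -> in_I3 h ->
  exists q, 1 < al * q /\ q < al /\ wpoly k al q /\ h = Hq k al q.
Proof.
  intros Hk Hth Hal Hal1 Hs HI.
  destruct h as [[[h1 h2] h3] h4]. destruct Hs as [e1 [e2 [e3 e4]]]. destruct HI as [i1 i2].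
  destruct k as [|k']; [lia|]. replace (S k' - 1)%nat with k' in * by lia.
  set (a := Ex h2). assert (Ha : 0 < a) by apply Ex_pos.
  set (q := psi al a).
  assert (Hd : 0 < al * a + 1) by nra.
  assert (Hq0 : q * (al * a + 1) = a + al) by (unfold q, psi; field; lra).
  assert (Hq1 : 1 < al * q) by nra.
  assert (Hq2 : q < al) by nra.
  assert (Hqp : 0 < q) by nra.
  pose proof (Ex_pos h4) as Hh4.
  assert (E4 : Ex h4 = q ^ S k').
  { rewrite e4, Ex_INR, fI_Ex by exact Hth. rewrite <- Hal. reflexivity. }
  assert (E2 : a = (/ q) ^ k' * / psi al (q ^ S k')).
  { assert (H3 : h3 = - h2) by lra.
    transitivity (Ex (INR k' * fI h3 th + fI h1 th)); [unfold a; now rewrite <- e2|].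
    rewrite Ex_plus, Ex_INR, !fI_Ex by exact Hth. rewrite <- Hal.
    rewrite i1, H3, !Ex_opp, E4. fold a.
    rewrite !psi_inv; try lra; try apply pow_lt; try lra. fold q. reflexivity. }
  set (Q := q ^ k') in *. assert (HQ : 0 < Q) by (apply pow_lt; lra).
  assert (Hqk : q ^ S k' = q * Q) by reflexivity.
  rewrite Hqk in E2, E4. rewrite pow_inv in E2. fold Q in E2.
  assert (HqQ : 0 < al * (q * Q) + 1) by (assert (0 < q*Q) by nra; nra).
  assert (Hps : psi al (q * Q) * (al * (q * Q) + 1) = q * Q + al) by (unfold psi; field; lra).
  assert (Hpsp : 0 < psi al (q * Q)) by (apply psi_pos; nra).
  assert (E2' : a * Q * psi al (q * Q) = 1) by (rewrite E2; field; lra).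
  assert (Ha2 : a * (al * q - 1) = al - q) by nra.
  exists q. split; [exact Hq1|]. split; [exact Hq2|]. split.
  - unfold wpoly. replace (S k' - 1)%nat with k' by lia. rewrite Hqk. fold Q.
    assert (a * Q * (q * Q + al) = al * (q * Q) + 1) by nra.
    nra.
  - unfold Hq. rewrite Hqk. fold Q.
    assert (Ea : (al - q) / (al * q - 1) = a) by (field_simplify_eq; nra).
    rewrite Ea. rewrite <- E4. rewrite !L_Ex. unfold a. rewrite L_Ex.
    rewrite i1, i2, Ropp_involutive. reflexivity.
Qed.

Lemma backward k th al q : (1 <= k)%nat -> -1 < th < 1 -> al = (1 - th) / (1 + th) -> 1 < al ->
  1 < al * q -> q < al -> wpoly k al q -> wp_system k th (Hq k al q) /\ in_I3 (Hq k al q).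
Proof.
  intros Hk Hth Hal Hal1 Hq1 Hq2 Hp.
  destruct k as [|k']; [lia|]. unfold wpoly in Hp. replace (S k' - 1)%nat with k' in * by lia.
  assert (Hqp : 0 < q) by nra.
  set (Q := q ^ k') in *. assert (HQ : 0 < Q) by (apply pow_lt; lra).
  assert (Hqk : q ^ S k' = q * Q) by reflexivity. rewrite Hqk in Hp.
  set (a := (al - q) / (al * q - 1)).
  assert (Ha : 0 < a) by (unfold a; apply Rdiv_lt_0_compat; lra).
  assert (Hpa : psi al a = q) by (unfold psi, a; field; split; nra).
  assert (HqQ : 0 < q * Q) by nra.
  assert (Hps : psi al (q * Q) = (q * Q + al) / (al * (q * Q) + 1)) by reflexivity.
  assert (Key : a * Q * psi al (q * Q) = 1).
  { rewrite Hps. unfold a. field_simplify_eq; [|split; nra]. nra. }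
  assert (Hpsp : 0 < psi al (q * Q)) by (apply psi_pos; nra).
  unfold Hq. rewrite Hqk. fold a.
  split; [|unfold in_I3; split; [reflexivity| now rewrite Ropp_involutive]].
  unfold wp_system. replace (S k' - 1)%nat with k' by lia.
  split; [|split; [|split]]; apply Ex_inj;
    rewrite ?Ex_plus, ?Ex_INR, ?fI_Ex by exact Hth; rewrite <- ?Hal;
    rewrite ?Ex_opp, ?Ex_L by (try exact Ha; nra).
  - rewrite psi_inv, Hpa by lra. rewrite pow_inv. reflexivity.
  - rewrite !psi_inv, Hpa by (try lra; nra). rewrite pow_inv. fold Q.
    field_simplify_eq; [|split; lra]. nra.
  - rewrite Hpa. fold Q. field_simplify_eq; [|lra]. nra.
  - rewrite Hpa. reflexivity.
Qed.

Lemma q1_of_sq q : 0 < q -> (q ^ 2 - 1) = 0 -> q = 1.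
Proof. intros Hq H. assert ((q - 1) * (q + 1) = 0) by (rewrite <- H; ring).
  apply Rmult_integral in H0. lra. Qed.

Lemma small_k k al q : (1 <= k)%nat -> (k <= 3)%nat -> 1 < al -> 0 < q -> wpoly k al q -> q = 1.
Proof.
  intros H1 H3 Hal Hq Hp. unfold wpoly in Hp.
  apply Rminus_diag_eq in Hp.
  destruct k as [|[|[|[|k]]]]; try lia; simpl in Hp; apply q1_of_sq; auto.
  - assert (E : (q ^ 2 - 1) * (- (1 + al^2)) = 0) by (rewrite <- Hp; ring).
    apply Rmult_integral in E. destruct E as [E|E]; [exact E|]. exfalso; nra.
  - assert (E : (q ^ 2 - 1) * (- (q^2 + 1 + al * (al - 1) * q)) = 0) by (rewrite <- Hp; ring).
    apply Rmult_integral in E. destruct E as [E|E]; [exact E|]. exfalso.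
    assert (0 < al * (al - 1) * q) by (apply Rmult_lt_0_compat; [apply Rmult_lt_0_compat|]; lra).
    nra.
  - assert (E : (q ^ 2 - 1) * (- (q^4 - al * q^3 + (al^2 + 1) * q^2 - al * q + 1)) = 0) by (rewrite <- Hp; ring).
    apply Rmult_integral in E. destruct E as [E|E]; [exact E|].
    exfalso; assert (0 < q^4 - al * q^3 + (al^2 + 1) * q^2 - al * q + 1); [|lra].
    replace (q^4 - al * q^3 + (al^2 + 1) * q^2 - al * q + 1) with
      ((q^2 - al*q/2)^2 + (1 - al*q/2)^2 + (al^2/2 + 1) * q^2) by field.
    assert (0 < (al^2/2 + 1) * q^2) by (apply Rmult_lt_0_compat; nra).
    nra.
Qed.

Lemma theta_bounds J beta : -1 < theta_of J beta < 1.
Proof.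
  unfold theta_of. rewrite tanh_Ex. pose proof (Ex_pos (J * beta)).
  split.
  - apply (Rmult_lt_reg_r (Ex (J*beta) + 1)); [lra|]. unfold Rdiv. rewrite Rmult_assoc, Rinv_l; lra.
  - apply (Rmult_lt_reg_r (Ex (J*beta) + 1)); [lra|]. unfold Rdiv. rewrite Rmult_assoc, Rinv_l; lra.
Qed.

Theorem part1 : forall (k : nat) (J beta : R),
     (1 <= k)%nat -> (k <= 3)%nat -> 0 < beta -> 1 < alpha_of J beta ->
     forall h : R4, wp_system k (theta_of J beta) h -> in_I3 h -> transl_inv h.
Proof.
  intros k J beta Hk1 Hk3 Hb Hal h Hs HI.
  destruct (forward k (theta_of J beta) (alpha_of J beta) h Hk1 (theta_bounds J beta) eq_refl Hal Hs HI)
    as [q [Hq1 [Hq2 [Hp Hh]]]].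
  assert (q = 1) by (apply (small_k k (alpha_of J beta)); auto; nra).
  subst q h. unfold Hq, transl_inv. rewrite pow1.
  replace ((alpha_of J beta - 1) / (alpha_of J beta * 1 - 1)) with 1 by (field; lra).
  unfold L. rewrite ln_1. split; [|split]; ring.
Qed.

Definition Cc (al s : R) : R := s ^ 3 - al * s ^ 2 - 2 * s + al + al ^ 2.
Definition tal (al : R) : R := al + / al.
Definition qp (s : R) : R := (s + sqrt (s ^ 2 - 4)) / 2.
Definition qm (s : R) : R := (s - sqrt (s ^ 2 - 4)) / 2.

Lemma poly4_iff al q : 0 < q -> (wpoly 4 al q <-> q = 1 \/ Cc al (q + / q) = 0).
Proof.
  intro Hq. unfold wpoly. simpl (4 - 1)%nat.
  assert (Id : (al - q) * q ^ 3 * (q ^ 4 + al) - (al * q - 1) * (al * q ^ 4 + 1)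
             = - ((q - 1) * (q + 1)) * q ^ 3 * Cc al (q + / q)).
  { unfold Cc. field. lra. }
  assert (Hq3 : 0 < q ^ 3) by (apply pow_lt; lra).
  split.
  - intro H. apply Rminus_diag_eq in H. rewrite Id in H.
    apply Rmult_integral in H. destruct H as [H|H]; [|now right].
    apply Rmult_integral in H. destruct H as [H|H]; [|lra].
    assert (H' : (q - 1) * (q + 1) = 0) by lra.
    apply Rmult_integral in H'. left; lra.
  - intros [H|H].
    + subst q. ring.
    + apply Rminus_diag_uniq. rewrite Id, H. ring.
Qed.

Lemma range_iff al q : 0 < q -> 1 < al -> (1 < al * q /\ q < al <-> q + / q < tal al).
Proof.
  intros Hq Hal. unfold tal.
  assert (E : q + / q - (al + / al) = (al * q - 1) * (q - al) / (al * q)) by (field; lra).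
  assert (Hd : 0 < al * q) by nra.
  split.
  - intros [H1 H2]. assert ((al * q - 1) * (q - al) / (al * q) < 0); [|lra].
    apply Rdiv_neg_pos; [nra|lra].
  - intro H. assert (Hn : (al * q - 1) * (q - al) / (al * q) < 0) by lra.
    assert (Hn' : (al * q - 1) * (q - al) < 0).
    { replace ((al * q - 1) * (q - al)) with ((al * q - 1) * (q - al) / (al * q) * (al * q)) by (field; lra).
      nra. }
    destruct (Rlt_or_le 1 (al * q)); [split; nra|].
    exfalso. assert (q < al) by nra. nra.
Qed.

Lemma sum_inv_ge2 q : 0 < q -> q <> 1 -> 2 < q + / q.
Proof.
  intros Hq Hn. assert (E : q + / q - 2 = (q - 1) ^ 2 / q) by (field; lra).
  assert (0 < (q - 1) ^ 2 / q); [|lra].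
  apply Rdiv_lt_0_compat; [|lra]. assert (q - 1 <> 0) by lra.
  simpl. rewrite Rmult_1_r. destruct (Rlt_or_le 0 (q - 1)); nra.
Qed.

Lemma w_facts s : 2 < s -> 0 < sqrt (s ^ 2 - 4) /\ sqrt (s ^ 2 - 4) * sqrt (s ^ 2 - 4) = s ^ 2 - 4.
Proof.
  intro Hs. assert (0 < s ^ 2 - 4) by nra.
  split; [now apply sqrt_lt_R0|]. apply sqrt_sqrt; lra.
Qed.

Lemma qpm_facts s : 2 < s ->
  0 < qm s /\ qm s < 1 /\ 1 < qp s /\ qp s * qm s = 1 /\ qp s + qm s = s /\
  qp s + / qp s = s /\ qm s + / qm s = s.
Proof.
  intro Hs. destruct (w_facts s Hs) as [Hw Hw2]. unfold qp, qm.
  set (w := sqrt (s ^ 2 - 4)) in *.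
  assert (Hw3 : s - 2 < w) by nra.
  assert (Hpm : (s + w) / 2 * ((s - w) / 2) = 1) by (field_simplify; nra).
  repeat split.
  - assert (w < s) by nra. lra.
  - lra.
  - lra.
  - exact Hpm.
  - field.
  - assert (E : / ((s + w) / 2) = (s - w) / 2).
    { apply (Rmult_eq_reg_l ((s + w) / 2)); [|lra]. rewrite Rinv_r by lra. lra. }
    rewrite E. field.
  - assert (E : / ((s - w) / 2) = (s + w) / 2).
    { assert (w < s) by nra.
      apply (Rmult_eq_reg_l ((s - w) / 2)); [|lra]. rewrite Rinv_r by lra. lra. }
    rewrite E. field.
Qed.

Lemma q_is_qpm q s : 0 < q -> q + / q = s -> 2 < s -> q = qp s \/ q = qm s.
Proof.
  intros Hq Hqs Hs. destruct (qpm_facts s Hs) as [_ [_ [_ [Hpm [Hsum _]]]]].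
  assert (E : q * q - s * q + 1 = 0).
  { rewrite <- Hqs. field. lra. }
  assert (E2 : (q - qp s) * (q - qm s) = 0).
  { replace ((q - qp s) * (q - qm s)) with (q * q - (qp s + qm s) * q + qp s * qm s) by ring.
    rewrite Hpm, Hsum. exact E. }
  apply Rmult_integral in E2. lra.
Qed.

Definition fl (ss : list R) : list R := flat_map (fun s => qp s :: qm s :: nil) ss.

Lemma fl_in x ss : (forall s, In s ss -> 2 < s) -> In x (fl ss) ->
  0 < x /\ exists s, In s ss /\ x + / x = s /\ (x = qp s \/ x = qm s).
Proof.
  intros Hall Hx. unfold fl in Hx. apply in_flat_map in Hx. destruct Hx as [s [Hs Hx]].
  pose proof (Hall s Hs) as H2. destruct (qpm_facts s H2) as [H0 [H1 [H3 [_ [_ [H5 H6]]]]]].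
  simpl in Hx. destruct Hx as [Hx|[Hx|[]]]; subst x.
  - split; [lra|]. exists s; auto.
  - split; [lra|]. exists s; auto.
Qed.

Lemma fl_len ss : length (fl ss) = (2 * length ss)%nat.
Proof. induction ss as [|s ss IH]; [reflexivity|]. change (fl (s :: ss)) with (qp s :: qm s :: fl ss). simpl. rewrite IH. lia. Qed.

Lemma fl_nodup ss : NoDup ss -> (forall s, In s ss -> 2 < s) -> NoDup (fl ss).
Proof.
  induction ss as [|s ss IH]; intros Hnd Hall.
  - constructor.
  - inversion Hnd as [|s0 ss0 Hnin Hnd']; subst.
    assert (Hall' : forall s', In s' ss -> 2 < s') by (intros; apply Hall; now right).
    pose proof (Hall s (or_introl eq_refl)) as H2.
    destruct (qpm_facts s H2) as [H0 [H1 [H3 [_ [_ [H5 H6]]]]]].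
    change (fl (s :: ss)) with (qp s :: qm s :: fl ss).
    constructor; [|constructor].
    + intros [E|E]; [lra|].
      destruct (fl_in _ _ Hall' E) as [_ [s' [Hs' [Hsum _]]]].
      apply Hnin. rewrite <- H5, Hsum. exact Hs'.
    + intro E. destruct (fl_in _ _ Hall' E) as [_ [s' [Hs' [Hsum _]]]].
      apply Hnin. rewrite <- H6, Hsum. exact Hs'.
    + now apply IH.
Qed.

Lemma q_char al ss q : 1 < al ->
  (forall s, In s ss <-> (2 < s < tal al /\ Cc al s = 0)) ->
  ((1 < al * q /\ q < al /\ wpoly 4 al q) <-> In q (1 :: fl ss)).
Proof.
  intros Hal Hss.
  assert (Hall : forall s, In s ss -> 2 < s) by (intros s Hs; apply Hss in Hs; lra).
  split.
  - intros [H1 [H2 Hp]]. assert (Hq : 0 < q) by nra.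
    apply (poly4_iff al q Hq) in Hp. destruct Hp as [Hp|Hp]; [left; auto|].
    destruct (Req_dec q 1) as [E|E]; [left; auto|right].
    pose proof (sum_inv_ge2 q Hq E) as Hs2.
    pose proof (proj1 (range_iff al q Hq Hal) (conj H1 H2)) as Hst.
    assert (Hin : In (q + / q) ss) by (apply Hss; auto).
    unfold fl. apply in_flat_map. exists (q + / q). split; [exact Hin|].
    destruct (q_is_qpm q (q + / q) Hq eq_refl Hs2) as [Eq|Eq]; rewrite Eq at 1; simpl; auto.
  - intros [E|E].
    + subst q. split; [lra|]. split; [lra|]. unfold wpoly. simpl. ring.
    + destruct (fl_in q ss Hall E) as [Hq [s [Hs [Hsum _]]]].
      apply Hss in Hs. destruct Hs as [[Hs1 Hs2] Hc].
      rewrite <- Hsum in Hs2, Hc.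
      destruct (proj2 (range_iff al q Hq Hal) Hs2) as [H1 H2].
      split; [exact H1|]. split; [exact H2|]. apply (poly4_iff al q Hq). now right.
Qed.

Lemma Hq_inj al x y : 0 < x -> 0 < y -> Hq 4 al x = Hq 4 al y -> x = y.
Proof.
  intros Hx Hy E. apply (f_equal snd) in E. unfold Hq in E. cbn [snd] in E. rename E into E4.
  assert (E' : x ^ 4 = y ^ 4).
  { rewrite <- (Ex_L (x ^ 4)), <- (Ex_L (y ^ 4)) by (apply pow_lt; lra). now rewrite E4. }
  assert (Ef : (x - y) * ((x + y) * (x * x + y * y)) = 0) by (simpl in E'; nra).
  apply Rmult_integral in Ef. destruct Ef as [Ef|Ef]; [lra|].
  assert (0 < (x + y) * (x * x + y * y)) by (apply Rmult_lt_0_compat; nra). lra.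
Qed.

Lemma count4 J beta ss : 1 < alpha_of J beta -> NoDup ss ->
  (forall s, In s ss <-> (2 < s < tal (alpha_of J beta) /\ Cc (alpha_of J beta) s = 0)) ->
  has_exactly (1 + 2 * length ss) (fun h => wp_system 4 (theta_of J beta) h /\ in_I3 h).
Proof.
  intros Hal Hnd Hss. set (al := alpha_of J beta) in *.
  assert (Hall : forall s, In s ss -> 2 < s) by (intros s Hs; apply Hss in Hs; lra).
  assert (Hpos : forall q, In q (1 :: fl ss) -> 0 < q).
  { intros q [E|E]; [lra|]. now destruct (fl_in q ss Hall E). }
  exists (map (Hq 4 al) (1 :: fl ss)). split; [|split].
  - apply NoDup_map_NoDup_ForallPairs.
    + intros x y Hx Hy E. apply (Hq_inj al); auto.
    + constructor; [|now apply fl_nodup].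
      intro E. destruct (fl_in 1 ss Hall E) as [_ [s [Hs [Hsum _]]]].
      apply Hall in Hs. replace (1 + / 1) with 2 in Hsum by (rewrite Rinv_1; ring). lra.
  - rewrite length_map. simpl. rewrite fl_len. reflexivity.
  - intro h. rewrite in_map_iff. split.
    + intros [q [Eh Hq']]. subst h.
      apply (q_char al ss q Hal Hss) in Hq'. destruct Hq' as [H1 [H2 Hp]].
      apply (backward 4 (theta_of J beta) al q); auto; try apply theta_bounds; try reflexivity.
    + intros [Hs HI].
      destruct (forward 4 (theta_of J beta) al h ltac:(lia) (theta_bounds J beta) eq_refl Hal Hs HI)
        as [q [H1 [H2 [Hp Eh]]]].
      exists q. split; [now symmetry|]. apply (q_char al ss q Hal Hss). auto.
Qed.

Definition Dl (al : R) : R := 4 * al ^ 5 - 23 * al ^ 4 - 18 * al ^ 3 + 13 * al ^ 2 + 32.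
Definition rs (al : R) : R := sqrt (al ^ 2 + 6).
Definition sst (al : R) : R := (al + rs al) / 3.
Definition Rr (al : R) : R := - 2 * al ^ 3 + 27 * al ^ 2 + 9 * al.

Lemma rs_facts al : 0 < al -> al < rs al /\ rs al * rs al = al ^ 2 + 6.
Proof.
  intro H. unfold rs. assert (E : sqrt (al ^ 2 + 6) * sqrt (al ^ 2 + 6) = al ^ 2 + 6)
    by (apply sqrt_sqrt; nra).
  split; [|exact E].
  assert (0 <= sqrt (al ^ 2 + 6)) by apply sqrt_pos. nra.
Qed.

Lemma C2pos al : 1 < al -> 0 < Cc al 2.
Proof. intro. unfold Cc. pose proof (Rle_0_sqr (al - 3/2)). unfold Rsqr in *. simpl. nra. Qed.

Lemma Ctpos al : 1 < al -> 0 < Cc al (tal al).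
Proof.
  intro H. unfold Cc, tal.
  replace ((al + / al) ^ 3 - al * (al + / al) ^ 2 - 2 * (al + / al) + al + al ^ 2)
    with (al ^ 2 + / al ^ 3) by (field; lra).
  assert (0 < / al ^ 3) by (apply Rinv_0_lt_compat, pow_lt; lra). nra.
Qed.

Lemma sst_crit al : 0 < al -> 3 * sst al ^ 2 - 2 * al * sst al - 2 = 0.
Proof. intro H. destruct (rs_facts al H) as [_ E]. unfold sst.
  replace (3 * ((al + rs al) / 3) ^ 2 - 2 * al * ((al + rs al) / 3) - 2)
    with ((rs al * rs al - al ^ 2 - 6) / 3) by field. rewrite E. field. Qed.

Lemma Cmin al s : 0 < al -> 0 <= s ->
  Cc al s - Cc al (sst al) = (s - sst al) ^ 2 * (s + 2 * sst al - al) /\ 0 < s + 2 * sst al - al.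
Proof.
  intros H Hs. pose proof (sst_crit al H) as Hc. destruct (rs_facts al H) as [Hr _].
  split.
  - set (u := sst al) in *.
    replace (Cc al s - Cc al u) with ((s - u) ^ 2 * (s + 2 * u - al) + (s - u) * (3 * u ^ 2 - 2 * al * u - 2))
      by (unfold Cc; ring).
    rewrite Hc. ring.
  - unfold sst. lra.
Qed.

Lemma Csst_val al : 0 < al -> Cc al (sst al) = (Rr al - (2 * al ^ 2 + 12) * rs al) / 27.
Proof.
  intro H. destruct (rs_facts al H) as [_ E]. pose proof (sst_crit al H) as Hc.
  set (u := sst al) in *.
  replace (Cc al u) with ((u - al / 3) * (3 * u ^ 2 - 2 * al * u - 2) / 3 - (2 * al ^ 2 + 12) * u / 9 + 7 * al / 9 + al ^ 2)
    by (unfold Cc; field).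
  rewrite Hc. unfold u, sst, Rr. field.
Qed.

Lemma sst_gt2 al : 5 / 2 < al -> 2 < sst al.
Proof. intro H. destruct (rs_facts al) as [_ E]; [lra|]. unfold sst.
  assert (0 <= rs al) by (unfold rs; apply sqrt_pos). nra. Qed.

Lemma sst_lt_t al : 1 < al -> sst al < tal al.
Proof.
  intro H. destruct (rs_facts al) as [Hr E]; [lra|]. unfold sst, tal.
  assert (Hi : al * / al = 1) by (field; lra).
  assert (0 < / al) by (apply Rinv_0_lt_compat; lra).
  assert (rs al < 2 * al + 3 * / al).
  { destruct (Rlt_or_le (rs al) (2 * al + 3 * / al)) as [L1|L1]; [exact L1|exfalso].
    assert (Hm : (2 * al + 3 * / al) * (2 * al + 3 * / al) <= rs al * rs al)
      by (apply Rmult_le_compat; lra).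
    rewrite E in Hm.
    replace ((2 * al + 3 * / al) * (2 * al + 3 * / al)) with (4 * al ^ 2 + 12 + 9 * (/ al * / al)) in Hm
      by (field; lra).
    assert (0 < / al * / al) by (apply Rmult_lt_0_compat; lra). nra. }
  lra.
Qed.

Lemma small_al al s : 1 < al -> al <= 5 / 2 -> 2 <= s -> 0 < Cc al s.
Proof.
  intros H1 H2 H3. pose proof (C2pos al H1) as HC.
  replace (Cc al s) with (Cc al 2 + (s - 2) * ((s - 2) * (s - 2) + (6 - al) * (s - 2) + (10 - 4 * al)))
    by (unfold Cc; ring).
  assert (0 <= (s - 2) * (s - 2)) by (apply Rmult_le_pos; lra).
  assert (0 <= (6 - al) * (s - 2)) by (apply Rmult_le_pos; lra).
  assert (0 <= (s - 2) * ((s - 2) * (s - 2) + (6 - al) * (s - 2) + (10 - 4 * al))) by (apply Rmult_le_pos; lra).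
  lra.
Qed.

Lemma Delta_id al : (2 * al ^ 2 + 12) ^ 2 * (al ^ 2 + 6) - Rr al ^ 2 = 27 * Dl al.
Proof. unfold Rr, Dl. ring. Qed.

Lemma Rr_pos al : 0 < al -> al < 13 -> 0 < Rr al.
Proof.
  intros H1 H2. unfold Rr.
  replace (- 2 * al ^ 3 + 27 * al ^ 2 + 9 * al) with (al * (2 * al * (13 - al) + al + 9)) by ring.
  assert (0 < 2 * al * (13 - al)) by (apply Rmult_lt_0_compat; lra).
  apply Rmult_lt_0_compat; lra.
Qed.

Lemma X_facts al : 0 < al -> 0 < (2 * al ^ 2 + 12) * rs al /\
  ((2 * al ^ 2 + 12) * rs al) * ((2 * al ^ 2 + 12) * rs al) = (2 * al ^ 2 + 12) ^ 2 * (al ^ 2 + 6).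
Proof.
  intro H. destruct (rs_facts al H) as [Hr E]. split.
  - apply Rmult_lt_0_compat; nra.
  - replace (((2 * al ^ 2 + 12) * rs al) * ((2 * al ^ 2 + 12) * rs al))
      with ((2 * al ^ 2 + 12) ^ 2 * (rs al * rs al)) by ring. now rewrite E.
Qed.

Lemma Csst_pos al : 0 < al -> al < 13 -> Dl al < 0 -> 0 < Cc al (sst al).
Proof.
  intros H1 H2 HD. rewrite Csst_val by lra. pose proof (Rr_pos al H1 H2) as HY.
  destruct (X_facts al H1) as [HX EX]. pose proof (Delta_id al) as Id.
  set (X := (2 * al ^ 2 + 12) * rs al) in *. set (Y := Rr al) in *.
  assert (X * X < Y * Y) by (simpl in Id; nra).
  assert (X < Y) by nra. lra.
Qed.

Lemma Csst_zero al : 0 < al -> al < 13 -> Dl al = 0 -> Cc al (sst al) = 0.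
Proof.
  intros H1 H2 HD. rewrite Csst_val by lra. pose proof (Rr_pos al H1 H2) as HY.
  destruct (X_facts al H1) as [HX EX]. pose proof (Delta_id al) as Id.
  set (X := (2 * al ^ 2 + 12) * rs al) in *. set (Y := Rr al) in *.
  assert (E : (X - Y) * (X + Y) = 0) by (simpl in Id; nra).
  apply Rmult_integral in E. destruct E; [|lra].
  replace (Y - X) with 0 by lra. field.
Qed.

Lemma Csst_neg al : 0 < al -> 0 < Dl al -> Cc al (sst al) < 0.
Proof.
  intros H1 HD. rewrite Csst_val by lra.
  destruct (X_facts al H1) as [HX EX]. pose proof (Delta_id al) as Id.
  set (X := (2 * al ^ 2 + 12) * rs al) in *. set (Y := Rr al) in *.
  assert (Y < X).
  { destruct (Rlt_or_le Y 0); [lra|].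
    assert (Y * Y < X * X) by (simpl in Id; nra). nra. }
  lra.
Qed.

Lemma Dl_neg_mid al : 5 / 2 <= al -> al <= 11 / 2 -> Dl al < 0.
Proof.
  intros H1 H2. unfold Dl.
  assert (A2 : 25 / 4 <= al ^ 2) by nra.
  assert (A3 : 0 < al ^ 3) by (apply pow_lt; lra).
  assert (A4 : al ^ 4 * (4 * al - 23) <= - al ^ 4).
  { assert (0 < al ^ 4) by (apply pow_lt; lra). nra. }
  replace (4 * al ^ 5) with (al ^ 4 * (4 * al) ) by ring.
  assert (al ^ 4 = al ^ 2 * al ^ 2) by ring.
  assert (al ^ 3 = al ^ 2 * al) by ring.
  nra.
Qed.

Lemma Dl_incr_ab a b : 0 <= a -> a < b -> Dl (a + 11 / 2) < Dl (b + 11 / 2).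
Proof.
  intros Ha Hab. assert (Hb : 0 < b) by lra. unfold Dl.
  assert (HQ : 0 < 6017 / 4 + 4393 / 2 * (a + b) + 686 * (a * a + a * b + b * b)
            + 87 * (a * a * a + a * a * b + a * b * b + b * b * b)
            + 4 * (a * a * a * a + a * a * a * b + a * a * b * b + a * b * b * b + b * b * b * b)).
  { assert (0 <= a * b) by nra. assert (0 <= a * a) by nra. assert (0 <= b * b) by nra.
    assert (0 <= a * a * a) by nra. assert (0 <= a * a * b) by nra. assert (0 <= a * b * b) by nra.
    assert (0 <= b * b * b) by nra. assert (0 <= a * a * a * a) by nra. assert (0 <= a * a * a * b) by nra.
    assert (0 <= a * a * b * b) by nra. assert (0 <= a * b * b * b) by nra. assert (0 <= b * b * b * b) by nra.
    lra. }
  match type of HQ with 0 < ?Q =>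
  assert (E : 4 * (b + 11 / 2) ^ 5 - 23 * (b + 11 / 2) ^ 4 - 18 * (b + 11 / 2) ^ 3 + 13 * (b + 11 / 2) ^ 2 + 32
     - (4 * (a + 11 / 2) ^ 5 - 23 * (a + 11 / 2) ^ 4 - 18 * (a + 11 / 2) ^ 3 + 13 * (a + 11 / 2) ^ 2 + 32)
     = (b - a) * Q) by field;
  assert (0 < (b - a) * Q) by (apply Rmult_lt_0_compat; lra) end.
  lra.
Qed.

Lemma Dl_incr x y : 11 / 2 <= x -> x < y -> Dl x < Dl y.
Proof.
  intros Hx Hxy. pose proof (Dl_incr_ab (x - 11 / 2) (y - 11 / 2) ltac:(lra) ltac:(lra)) as H.
  replace (x - 11 / 2 + 11 / 2) with x in H by ring.
  replace (y - 11 / 2 + 11 / 2) with y in H by ring. exact H.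
Qed.

Lemma Dl_637 : Dl (637 / 100) < 0.
Proof. unfold Dl. lra. Qed.
Lemma Dl_638 : 0 < Dl (638 / 100).
Proof. unfold Dl. lra. Qed.

Lemma caseA al ac : 1 < al -> al < ac -> 637 / 100 < ac < 638 / 100 -> Dl ac = 0 ->
  forall s, 2 <= s -> 0 < Cc al s.
Proof.
  intros H1 H2 Hac HD s Hs.
  destruct (Rle_or_lt al (5 / 2)) as [L1|L1]; [now apply small_al|].
  assert (HDl : Dl al < 0).
  { destruct (Rle_or_lt al (11 / 2)) as [L2|L2]; [apply Dl_neg_mid; lra|].
    rewrite <- HD. apply Dl_incr; lra. }
  pose proof (Csst_pos al ltac:(lra) ltac:(lra) HDl) as Hc.
  destruct (Cmin al s ltac:(lra) ltac:(lra)) as [E Hp].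
  assert (0 <= (s - sst al) ^ 2 * (s + 2 * sst al - al)).
  { apply Rmult_le_pos; [|lra]. simpl. rewrite Rmult_1_r. apply Rle_0_sqr. }
  lra.
Qed.

Lemma caseB al : 637 / 100 < al < 638 / 100 -> Dl al = 0 ->
  forall s, In s (sst al :: nil) <-> (2 < s < tal al /\ Cc al s = 0).
Proof.
  intros Hal HD s. pose proof (Csst_zero al ltac:(lra) ltac:(lra) HD) as Hc.
  split.
  - intros [E|[]]. subst s. split; [split|exact Hc].
    + apply sst_gt2; lra.
    + apply sst_lt_t; lra.
  - intros [[Hs1 Hs2] Hcs]. left.
    destruct (Cmin al s ltac:(lra) ltac:(lra)) as [E Hp].
    rewrite Hcs, Hc in E.
    assert (E2 : (s - sst al) ^ 2 = 0).
    { apply (Rmult_eq_reg_r (s + 2 * sst al - al)); lra. }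
    simpl in E2. rewrite Rmult_1_r in E2. apply Rmult_integral in E2. lra.
Qed.

Lemma two_roots al s1 s2 s : Cc al s1 = 0 -> Cc al s2 = 0 -> 0 < s1 -> s1 < s2 ->
  Cc al s = 0 -> 0 <= s -> 0 < al -> s = s1 \/ s = s2.
Proof.
  intros C1 C2 H1 H12 Cs Hs Hal.
  destruct (Req_dec s s1) as [E|N1]; [now left|].
  destruct (Req_dec s s2) as [E|N2]; [now right|]. exfalso.
  set (g := fun x y => x * x + x * y + y * y - al * (x + y) - 2).
  assert (Hg : forall x y, Cc al x - Cc al y = (x - y) * g x y) by (intros; unfold Cc, g; ring).
  assert (G1 : g s s1 = 0).
  { pose proof (Hg s s1) as E. rewrite Cs, C1 in E.
    assert (E' : (s - s1) * g s s1 = 0) by lra. apply Rmult_integral in E'. destruct E'; [lra|auto]. }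
  assert (G2 : g s2 s1 = 0).
  { pose proof (Hg s2 s1) as E. rewrite C2, C1 in E.
    assert (E' : (s2 - s1) * g s2 s1 = 0) by lra. apply Rmult_integral in E'. destruct E'; [lra|auto]. }
  assert (E3 : (s - s2) * (s + s2 + s1 - al) = 0).
  { rewrite <- G2 at 1. replace ((s - s2) * (s + s2 + s1 - al)) with (g s s1 - g s2 s1) by (unfold g; ring).
    rewrite G1, G2. ring. }
  apply Rmult_integral in E3. destruct E3 as [E3|E3]; [lra|].
  assert (V : al + al ^ 2 + s1 * s2 * (al - s1 - s2) = - s1 * g s1 s2).
  { replace (al + al ^ 2) with (- (s1 ^ 3 - al * s1 ^ 2 - 2 * s1)) by (unfold Cc in C1; lra).
    unfold g; ring. }
  assert (G3 : g s1 s2 = 0) by (unfold g in *; lra).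
  rewrite G3 in V. replace (al - s1 - s2) with s in V by lra.
  assert (0 <= s1 * s2 * s) by (apply Rmult_le_pos; [apply Rmult_le_pos|]; lra).
  nra.
Qed.

Lemma caseC al ac : 637 / 100 < ac < 638 / 100 -> Dl ac = 0 -> ac < al ->
  exists s1 s2, s1 < s2 /\ forall s, In s (s1 :: s2 :: nil) <-> (2 < s < tal al /\ Cc al s = 0).
Proof.
  intros Hac HD H.
  assert (HDl : 0 < Dl al) by (rewrite <- HD; apply Dl_incr; lra).
  pose proof (Csst_neg al ltac:(lra) HDl) as Hc.
  pose proof (C2pos al ltac:(lra)) as H2. pose proof (Ctpos al ltac:(lra)) as Ht.
  pose proof (sst_gt2 al ltac:(lra)) as Hs2. pose proof (sst_lt_t al ltac:(lra)) as Hst.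
  assert (Cont : continuity (fun x => Cc al x)) by (unfold Cc; reg).
  assert (Cont' : continuity (fun x => - Cc al x)) by (unfold Cc; reg).
  destruct (IVT (fun x => - Cc al x) 2 (sst al) Cont' Hs2 ltac:(lra) ltac:(lra)) as [s1 [[L1 L2] E1]].
  destruct (IVT (fun x => Cc al x) (sst al) (tal al) Cont Hst ltac:(lra) ltac:(lra)) as [s2 [[L3 L4] E2]].
  simpl in E1, E2.
  assert (N1 : s1 <> 2) by (intro; subst; lra).
  assert (N2 : s1 <> sst al) by (intro; subst; lra).
  assert (N3 : s2 <> sst al) by (intro; subst; lra).
  assert (N4 : s2 <> tal al) by (intro; subst; lra).
  assert (E1' : Cc al s1 = 0) by lra.
  exists s1, s2. split; [lra|].
  intro s. split.
  - intros [E|[E|[]]]; subst s; repeat split; lra.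
  - intros [[Hs Hs'] Cs]. destruct (two_roots al s1 s2 s E1' E2 ltac:(lra) ltac:(lra) Cs ltac:(lra) ltac:(lra)) as [E|E];
      subst; simpl; auto.
Qed.

Theorem theorem3 :
  (forall (k : nat) (J beta : R),
     (1 <= k)%nat -> (k <= 3)%nat -> 0 < beta -> 1 < alpha_of J beta ->
     forall h : R4, wp_system k (theta_of J beta) h -> in_I3 h -> transl_inv h)
  /\
  (exists alpha_cr : R,
     637 / 100 < alpha_cr < 638 / 100 /\
     forall (J beta : R), 0 < beta -> 1 < alpha_of J beta ->
       (alpha_of J beta < alpha_cr ->
          has_exactly 1 (fun h => wp_system 4 (theta_of J beta) h /\ in_I3 h)) /\
       (alpha_of J beta = alpha_cr ->
          has_exactly 3 (fun h => wp_system 4 (theta_of J beta) h /\ in_I3 h)) /\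
       (alpha_cr < alpha_of J beta ->
          has_exactly 5 (fun h => wp_system 4 (theta_of J beta) h /\ in_I3 h))).
Proof.
  split; [exact part1|].
  assert (Cont : continuity Dl) by (unfold Dl; reg).
  destruct (IVT Dl (637 / 100) (638 / 100) Cont ltac:(lra) Dl_637 Dl_638) as [ac [[L1 L2] HD]].
  assert (N1 : ac <> 637 / 100) by (intro E; rewrite E in HD; pose proof Dl_637; lra).
  assert (N2 : ac <> 638 / 100) by (intro E; rewrite E in HD; pose proof Dl_638; lra).
  assert (Hac : 637 / 100 < ac < 638 / 100) by lra.
  exists ac. split; [exact Hac|].
  intros J beta Hb Hal. split; [|split].
  - intro H. apply (count4 J beta nil Hal); [constructor|].
    intro s. split; [intros []|]. intros [[Hs1 Hs2] Hc].
    pose proof (caseA (alpha_of J beta) ac Hal H Hac HD s ltac:(lra)). lra.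
  - intro H. apply (count4 J beta (sst (alpha_of J beta) :: nil) Hal).
    + constructor; [intros []|constructor].
    + apply caseB; rewrite H; auto.
  - intro H. destruct (caseC (alpha_of J beta) ac Hac HD H) as [s1 [s2 [Hlt Hch]]].
    apply (count4 J beta (s1 :: s2 :: nil) Hal).
    + constructor; [|constructor; [intros []|constructor]].
      intros [E|[]]. lra.
    + exact Hch.
Qed.
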